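(* Let $\mathcal{F}$ be a family of irreducible and reversible finite Markov chains. (1) Continuous time, $\mathcal{F}=(\mu_n,\mathcal{S}_n,L_n,\pi_n)_{n\ge1}$: if $\liminf_n\pi_n(|\mu_n/\pi_n|^2)>1$, then $\mathcal{F}$ has an $L^2$-cutoff if and only if it has an $L^2$-pre-cutoff. (2) Discrete time, $\mathcal{F}=(\mu_n,\mathcal{S}_n,K_n,\pi_n)_{n\ge1}$: if $\liminf_n\pi_n(|\mu_nK_n/\pi_n|^2)>1$ and $T_{n,2}(\mu_n,\epsilon_0)\to\infty$ for some $\epsilon_0\in(0,\infty)$, then $\mathcal{F}$ has an $L^2$-cutoff if and only if it has an $L^2$-pre-cutoff.
   Context: For a finite irreducible Markov chain on $\mathcal{S}$ with stationary distribution $\pi$ and initial distribution $\mu$: in discrete time with transition matrix $K$, $d_2(\mu,m)=\big(\sum_y|\mu K^m(y)/\pi(y)-1|^2\pi(y)\big)^{1/2}$ for integers $m\ge0$; in continuous time with generator $L$ and $H_t=e^{tL}$, $d_2(\mu,t)=\big(\sum_y|\mu H_t(y)/\pi(y)-1|^2\pi(y)\big)^{1/2}$, $t\ge0$. Here $\pi(|f|^2)=\sum_y|f(y)|^2\pi(y)$ and $(\mu/\pi)(y)=\mu(y)/\pi(y)$. The $L^2$-mixing time is $T_2(\mu,\epsilon)=\min\{t\ge0:d_2(\mu,t)\le\epsilon\}$ ($t$ integer in discrete time). $d_{n,2},T_{n,2}$ denote these for the $n$th chain. $L^2$-cutoff (discrete time): there is $t_n>0$ with $d_{n,2}(\mu_n,\lceil(1+a)t_n\rceil)\to0$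 and $d_{n,2}(\mu_n,\lfloor(1-a)t_n\rfloor)\to\infty$ for all $a\in(0,1)$. $L^2$-pre-cutoff (discrete time): there are $t_n>0$ and $0<A<B$ with $\limsup_n d_{n,2}(\mu_n,\lceil Bt_n\rceil)=0$ and $\liminf_n d_{n,2}(\mu_n,\lfloor At_n\rfloor)>0$. In continuous time both definitions are the same with $\lceil\cdot\rceil,\lfloor\cdot\rfloor$ removed. *)

(* Defs.v *)
From Stdlib Require Import Reals Relations ClassicalEpsilon Factorial.
Open Scope R_scope.

(* States of the n-th chain: 0 .. N-1 (as nat); matrices/vectors are functions on nat,
   only entries below N matter. *)

Fixpoint fsum (N : nat) (f : nat -> R) : R :=
  match N with O => 0 | S k => fsum k f + f k end.

Definition matmul (N : nat) (A B : nat -> nat -> R) : nat -> nat -> R :=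
  fun x y => fsum N (fun z => A x z * B z y).

Definition matid : nat -> nat -> R := fun x y => if Nat.eqb x y then 1 else 0.

Fixpoint matpow (N : nat) (A : nat -> nat -> R) (m : nat) : nat -> nat -> R :=
  match m with O => matid | S k => matmul N (matpow N A k) A end.

Definition vecmat (N : nat) (mu : nat -> R) (A : nat -> nat -> R) : nat -> R :=
  fun y => fsum N (fun x => mu x * A x y).

(* Heat semigroup H_t = e^{tL}, entrywise the sum of the (convergent) series
   sum_k t^k L^k / k!. *)
Definition heat (N : nat) (L : nat -> nat -> R) (t : R) : nat -> nat -> R :=
  fun x y => epsilon (inhabits 0)
    (fun l => Un_cv (fun K => sum_f_R0 (fun k => t ^ k / INR (Factorial.fact k) * matpow N L k x y) K) l).

Definition is_prob (N : nat) (p : nat -> R) : Prop :=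
  (forall x, (x < N)%nat -> 0 <= p x) /\ fsum N p = 1.

Definition is_kernel (N : nat) (K : nat -> nat -> R) : Prop :=
  forall x, (x < N)%nat -> (forall y, (y < N)%nat -> 0 <= K x y) /\ fsum N (K x) = 1.

Definition is_generator (N : nat) (L : nat -> nat -> R) : Prop :=
  forall x, (x < N)%nat ->
    (forall y, (y < N)%nat -> x <> y -> 0 <= L x y) /\ fsum N (L x) = 0.

Definition irreducible (N : nat) (A : nat -> nat -> R) : Prop :=
  (0 < N)%nat /\
  forall x y, (x < N)%nat -> (y < N)%nat ->
    clos_refl_trans nat (fun u v => (u < N)%nat /\ (v < N)%nat /\ u <> v /\ 0 < A u v) x y.

Definition stationary_kernel (N : nat) (K : nat -> nat -> R) (pi : nat -> R) : Prop :=
  is_prob N pi /\ forall y, (y < N)%nat -> vecmat N pi K y = pi y.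

Definition stationary_generator (N : nat) (L : nat -> nat -> R) (pi : nat -> R) : Prop :=
  is_prob N pi /\ forall y, (y < N)%nat -> vecmat N pi L y = 0.

Definition reversible (N : nat) (A : nat -> nat -> R) (pi : nat -> R) : Prop :=
  forall x y, (x < N)%nat -> (y < N)%nat -> pi x * A x y = pi y * A y x.

Definition l2norm2 (N : nat) (nu pi : nat -> R) : R :=
  fsum N (fun y => (nu y / pi y) ^ 2 * pi y).

Definition l2dist (N : nat) (nu pi : nat -> R) : R :=
  sqrt (fsum N (fun y => (nu y / pi y - 1) ^ 2 * pi y)).

Definition d2_disc (N : nat) (K : nat -> nat -> R) (pi mu : nat -> R) (m : nat) : R :=
  l2dist N (vecmat N mu (matpow N K m)) pi.

Definition d2_cont (N : nat) (L : nat -> nat -> R) (pi mu : nat -> R) (t : R) : R :=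
  l2dist N (vecmat N mu (heat N L t)) pi.

Definition nfloor (x : R) : nat := Z.to_nat (Int_part x).
Definition nceil (x : R) : nat := Z.to_nat (- Int_part (- x)).

(* "liminf_n u n > c" *)
Definition liminf_gt (u : nat -> R) (c : R) : Prop :=
  exists c', c < c' /\ exists n0, forall n, (n0 <= n)%nat -> c' <= u n.

Definition cutoff_cont (d : nat -> R -> R) : Prop :=
  exists tn : nat -> R, (forall n, 0 < tn n) /\
    forall a, 0 < a < 1 ->
      Un_cv (fun n => d n ((1 + a) * tn n)) 0 /\
      cv_infty (fun n => d n ((1 - a) * tn n)).

Definition precutoff_cont (d : nat -> R -> R) : Prop :=
  exists (tn : nat -> R) (A B : R), (forall n, 0 < tn n) /\ 0 < A /\ A < B /\
    Un_cv (fun n => d n (B * tn n)) 0 /\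
    liminf_gt (fun n => d n (A * tn n)) 0.

Definition cutoff_disc (d : nat -> nat -> R) : Prop :=
  exists tn : nat -> R, (forall n, 0 < tn n) /\
    forall a, 0 < a < 1 ->
      Un_cv (fun n => d n (nceil ((1 + a) * tn n))) 0 /\
      cv_infty (fun n => d n (nfloor ((1 - a) * tn n))).

Definition precutoff_disc (d : nat -> nat -> R) : Prop :=
  exists (tn : nat -> R) (A B : R), (forall n, 0 < tn n) /\ 0 < A /\ A < B /\
    Un_cv (fun n => d n (nceil (B * tn n))) 0 /\
    liminf_gt (fun n => d n (nfloor (A * tn n))) 0.

(* T_2(mu, eps) > M  (discrete time), with min of the empty set = +infinity *)
Definition T2_disc_gt (d : nat -> R) (eps : R) (M : nat) : Prop :=
  forall m, (m <= M)%nat -> eps < d m.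

Definition T2_disc_to_infty (d : nat -> nat -> R) (eps : R) : Prop :=
  forall M, exists n0, forall n, (n0 <= n)%nat -> T2_disc_gt (d n) eps M.

(* Main.v *)
Require Import Defs.
From Coquelicot Require Import Coquelicot.
From Stdlib Require Import Reals Lra Lia Psatz Classical ClassicalEpsilon Relations Factorial.
Require Import Defs.
Open Scope R_scope.

Lemma pow_inv_le (x y : R) (n : nat) :
  0 <= x -> 0 <= y -> (1 <= n)%nat -> x ^ n <= y ^ n -> x <= y.
Proof.
  intros Hx Hy Hn H. destruct (Rle_lt_dec x y) as [|Hlt]; auto.
  exfalso. assert (y ^ n < x ^ n).
  { destruct n as [|n]; [lia|]. clear Hn H.
    induction n as [|n IH]; simpl in *; [lra|].
    assert (0 <= y * (y ^ n)) by (apply Rmult_le_pos; auto; apply pow_le; auto).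
    nra. }
  lra.
Qed.

Lemma pow_le_1_decr (x : R) (n m : nat) :
  0 <= x <= 1 -> (n <= m)%nat -> x ^ m <= x ^ n.
Proof.
  intros Hx Hnm. induction Hnm; [lra|]. simpl.
  assert (0 <= x ^ m) by (apply pow_le; lra). nra.
Qed.

Lemma pow_le_1' (x : R) (n : nat) : 0 <= x <= 1 -> x ^ n <= 1.
Proof. intros. rewrite <- (pow1 n). apply pow_incr. lra. Qed.

Lemma mono_le (D : nat -> R) :
  (forall m, D (S m) <= D m) -> forall m m', (m <= m')%nat -> D m' <= D m.
Proof. intros H m m' Hm. induction Hm; [lra|]. specialize (H m0). lra. Qed.

(* ---------- chord inequality for log-convex sequences ---------- *)
Section Chord.
Variable D : nat -> R.
Hypothesis HD0 : forall m, 0 <= D m.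
Hypothesis Hmon : forall m, D (S m) <= D m.
Hypothesis Hcvx : forall m, D (S m) ^ 2 <= D m * D (S (S m)).

Lemma zero_back : forall k, D (S k) = 0 -> forall m, (1 <= m <= S k)%nat -> D m = 0.
Proof.
  induction k as [|k IH]; intros Hk m Hm.
  - assert (m = 1%nat) by lia. subst. auto.
  - assert (Hk' : D (S k) = 0).
    { specialize (Hcvx k). rewrite Hk in Hcvx. specialize (HD0 (S k)).
      assert (D (S k) ^ 2 <= 0) by lra. nra. }
    destruct (Nat.eq_dec m (S (S k))) as [->|]; auto. apply IH; auto; lia.
Qed.

Lemma ratio_mono : (forall m, 0 < D m) ->
  forall m m', (m <= m')%nat -> D (S m) / D m <= D (S m') / D m'.
Proof.
  intros Hpos m m' Hm. induction Hm; [lra|].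
  eapply Rle_trans; [apply IHHm|].
  specialize (Hcvx m0). pose proof (Hpos m0). pose proof (Hpos (S m0)).
  apply (Rmult_le_reg_r (D m0 * D (S m0))); [nra|].
  replace (D (S m0) / D m0 * (D m0 * D (S m0))) with (D (S m0) ^ 2) by (field; lra).
  replace (D (S (S m0)) / D (S m0) * (D m0 * D (S m0))) with (D m0 * D (S (S m0))) by (field; lra).
  auto.
Qed.

Lemma grow_up (rho : R) (i : nat) : 0 <= rho ->
  forall l, (forall m, (i <= m < i + l)%nat -> D (S m) <= rho * D m) ->
  D (i + l)%nat <= D i * rho ^ l.
Proof.
  intros Hr l. induction l as [|l IH]; intros H.
  - rewrite Nat.add_0_r. simpl. lra.
  - replace (i + S l)%nat with (S (i + l)) by lia.
    assert (D (S (i + l)) <= rho * D (i + l)%nat) by (apply H; lia).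
    assert (D (i + l)%nat <= D i * rho ^ l) by (apply IH; intros; apply H; lia).
    simpl. nra.
Qed.

Lemma grow_down (rho : R) (j : nat) : 0 <= rho ->
  forall l, (forall m, (j <= m)%nat -> rho * D m <= D (S m)) ->
  rho ^ l * D j <= D (j + l)%nat.
Proof.
  intros Hr l H. induction l as [|l IH].
  - rewrite Nat.add_0_r. simpl. lra.
  - replace (j + S l)%nat with (S (j + l)) by lia.
    assert (rho * D (j + l)%nat <= D (S (j + l))) by (apply H; lia).
    simpl. assert (0 <= rho ^ l) by (apply pow_le; auto). nra.
Qed.

Lemma chord : forall i j k, (i <= j <= k)%nat ->
  D j ^ (k - i) <= D i ^ (k - j) * D k ^ (j - i).
Proof.
  intros i j k Hijk.
  destruct (Nat.eq_dec i j) as [<-|Hij].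
  { rewrite Nat.sub_diag. simpl. lra. }
  destruct (Nat.eq_dec j k) as [<-|Hjk].
  { rewrite Nat.sub_diag. simpl. lra. }
  destruct (Rle_lt_dec (D k) 0) as [Hk|Hk].
  { assert (D k = 0) by (specialize (HD0 k); lra).
    destruct k as [|k]; [lia|].
    assert (D j = 0) by (apply (zero_back k); auto; lia).
    rewrite H0. rewrite pow_i by lia.
    apply Rmult_le_pos; apply pow_le; auto. }
  assert (Hpos : forall m, (m <= k)%nat -> 0 < D m).
  { intros m Hm. pose proof (mono_le D Hmon m k Hm). lra. }
  set (E := fun m => if Nat.leb m k then D m else D k * / 2 ^ (m - k)).
  assert (HEpos : forall m, 0 < E m).
  { intros m. unfold E. destruct (Nat.leb m k) eqn:E1.
    - apply Hpos. apply Nat.leb_le; auto.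
    - apply Rmult_lt_0_compat; auto. apply Rinv_0_lt_compat, pow_lt; lra. }
  clear E HEpos.
  set (rho := D j / D (j - 1)%nat).
  assert (Hrho : 0 <= rho).
  { unfold rho. apply Rmult_le_pos; auto. left; apply Rinv_0_lt_compat, Hpos; lia. }
  assert (Hratio : forall m m', (m <= m' <= k - 1)%nat -> D (S m) / D m <= D (S m') / D m').
  { intros m m' Hm. induction m' as [|m' IH].
    - assert (m = 0%nat) by lia. subst. lra.
    - destruct (Nat.eq_dec m (S m')) as [->|Hne]; [lra|].
      eapply Rle_trans; [apply IH; lia|].
      specialize (Hcvx m'). pose proof (Hpos m' ltac:(lia)). pose proof (Hpos (S m') ltac:(lia)).
      apply (Rmult_le_reg_r (D m' * D (S m'))); [nra|].
      replace (D (S m') / D m' * (D m' * D (S m'))) with (D (S m') ^ 2) by (field; lra).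
      replace (D (S (S m')) / D (S m') * (D m' * D (S m'))) with (D m' * D (S (S m'))) by (field; lra).
      auto. }
  assert (H1 : D (i + (j - i))%nat <= D i * rho ^ (j - i)).
  { apply grow_up; auto. intros m Hm.
    assert (D (S m) / D m <= rho).
    { unfold rho. replace j with (S (j - 1)) at 1 by lia. apply Hratio. lia. }
    pose proof (Hpos m ltac:(lia)).
    apply (Rmult_le_reg_r (/ D m)); [apply Rinv_0_lt_compat; auto|].
    replace (rho * D m * / D m) with rho by (field; lra). auto. }
  replace (i + (j - i))%nat with j in H1 by lia.
  assert (H2 : rho ^ (k - j) * D j <= D k).
  { assert (Hg : forall l, (l <= k - j)%nat -> rho ^ l * D j <= D (j + l)%nat).
    { induction l as [|l IH]; intros Hl.
      - rewrite Nat.add_0_r. simpl. lra.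
      - replace (j + S l)%nat with (S (j + l)) by lia.
        assert (rho <= D (S (j + l)) / D (j + l)%nat).
        { unfold rho. replace j with (S (j - 1)) at 1 by lia. apply Hratio. lia. }
        pose proof (Hpos (j + l)%nat ltac:(lia)).
        assert (rho * D (j + l)%nat <= D (S (j + l))).
        { apply (Rmult_le_reg_r (/ D (j + l)%nat)); [apply Rinv_0_lt_compat; auto|].
          replace (rho * D (j + l)%nat * / D (j + l)%nat) with rho by (field; lra). auto. }
        simpl. assert (0 <= rho ^ l) by (apply pow_le; auto).
        specialize (IH ltac:(lia)). nra. }
    specialize (Hg (k - j)%nat (le_n _)). replace (j + (k - j))%nat with k in Hg by lia. auto. }
  set (a := (k - j)%nat) in *. set (b := (j - i)%nat) in *.
  replace (k - i)%nat with (a + b)%nat by (unfold a, b; lia).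
  assert (Hj0 := HD0 j). assert (Hi0 := HD0 i).
  assert (A1 : D j ^ a <= D i ^ a * rho ^ (b * a)).
  { rewrite pow_mult, <- Rpow_mult_distr. apply pow_incr. split; auto. }
  assert (A2 : rho ^ (b * a) * D j ^ b <= D k ^ b).
  { rewrite Nat.mul_comm, pow_mult, <- Rpow_mult_distr. apply pow_incr. split; auto.
    apply Rmult_le_pos; auto. apply pow_le; auto. }
  rewrite pow_add.
  assert (0 <= D j ^ a) by (apply pow_le; auto).
  assert (0 <= D j ^ b) by (apply pow_le; auto).
  assert (0 <= D i ^ a) by (apply pow_le; auto).
  assert (0 <= rho ^ (b * a)) by (apply pow_le; auto).
  destruct (Rle_lt_dec rho 0) as [Hr0|Hr0].
  { assert (Hr00 : rho = 0) by lra. assert (b <> 0%nat) by (unfold b; lia).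
    rewrite Hr00, pow_i in A1 by (unfold a, b; nia). assert (D j ^ a <= 0) by lra.
    assert (Hz : D j ^ a = 0) by lra. rewrite Hz. rewrite Rmult_0_l.
    apply Rmult_le_pos; auto. apply pow_le; auto. }
  assert (0 < rho ^ (b * a)) by (apply pow_lt; auto).
  apply (Rmult_le_reg_l (rho ^ (b * a))); auto.
  assert (B1 : D j ^ a * D j ^ b <= D i ^ a * rho ^ (b * a) * D j ^ b)
    by (apply Rmult_le_compat_r; auto).
  assert (B2 : D i ^ a * (rho ^ (b * a) * D j ^ b) <= D i ^ a * D k ^ b)
    by (apply Rmult_le_compat_l; auto).
  rewrite Rmult_assoc in B1.
  assert (B3 : D j ^ a * D j ^ b <= D i ^ a * D k ^ b) by lra.
  apply Rmult_le_compat_l; auto.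
Qed.
End Chord.

Lemma least_ex (P : nat -> Prop) : (exists m, P m) -> exists m, P m /\ forall k, (k < m)%nat -> ~ P k.
Proof.
  intros [m Hm]. apply NNPP. intro Hno.
  assert (forall b k, (k <= b)%nat -> ~ P k).
  { induction b as [|b IH]; intros k Hk HPk.
    - apply Hno. exists k. split; auto. intros; lia.
    - destruct (Nat.eq_dec k (S b)) as [->|].
      + apply Hno. exists (S b). split; auto. intros k' Hk'. apply IH. lia.
      + apply (IH k); auto; lia. }
  apply (H m m); auto.
Qed.

Lemma nat_above (x : R) : exists n : nat, x <= INR n.
Proof.
  destruct (Rle_lt_dec x 0).
  - exists 0%nat. simpl. lra.
  - destruct (archimed x) as [H1 H2].
    exists (Z.to_nat (up x)). rewrite INR_IZR_INZ, Znat.Z2Nat.id.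
    + lra.
    + apply le_IZR. lra.
Qed.

Lemma eventually_and (P Q : nat -> Prop) :
  (exists n0, forall n, (n0 <= n)%nat -> P n) -> (exists n0, forall n, (n0 <= n)%nat -> Q n) ->
  exists n0, forall n, (n0 <= n)%nat -> P n /\ Q n.
Proof.
  intros [a Ha] [b Hb]. exists (max a b). intros n Hn. split; [apply Ha|apply Hb]; lia.
Qed.

Lemma cv0_below (u : nat -> R) (e : R) : Un_cv u 0 -> 0 < e -> exists n0, forall n, (n0 <= n)%nat -> u n < e.
Proof.
  intros H He. destruct (H e He) as [n0 Hn0]. exists n0. intros n Hn.
  specialize (Hn0 n Hn). unfold R_dist in Hn0. rewrite Rminus_0_r in Hn0.
  apply Rabs_def2 in Hn0. lra.
Qed.

Section Core.
Variable D : nat -> nat -> R.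
Hypothesis HD0 : forall n m, 0 <= D n m.
Hypothesis Hmon : forall n m, D n (S m) <= D n m.
Hypothesis Hcvx : forall n m, D n (S m) ^ 2 <= D n m * D n (S (S m)).
Variables (p q : nat -> nat) (delta : R).
Hypothesis Hdelta : 0 < delta.
Hypothesis Hp : exists n0, forall n, (n0 <= n)%nat -> delta <= D n (p n).
Hypothesis Hq : Un_cv (fun n => D n (q n)) 0.
Hypothesis Hpinf : forall K, exists n0, forall n, (n0 <= n)%nat -> (K <= p n)%nat.
Hypothesis Hratio : exists R0 n0, forall n, (n0 <= n)%nat -> INR (q n) <= R0 * INR (p n).

Definition eps_c := Rmin delta 1 / 2.

Definition isleast n m := D n m <= eps_c /\ forall k, (k < m)%nat -> ~ (D n k <= eps_c).

Definition sstar n : nat := max 1 (epsilon (inhabits 1%nat) (isleast n)).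

Lemma core_good : exists n0, forall n, (n0 <= n)%nat ->
  isleast n (sstar n) /\ (p n < sstar n)%nat /\ (sstar n <= q n)%nat /\ (1 <= p n)%nat.
Proof.
  assert (He : 0 < eps_c) by (unfold eps_c; apply Rmin_case; lra).
  destruct (eventually_and _ _ Hp (cv0_below _ _ Hq He)) as [n1 H1].
  destruct (Hpinf 1%nat) as [n2 H2].
  exists (max n1 n2). intros n Hn. destruct (H1 n ltac:(lia)) as [Hdp Hdq].
  specialize (H2 n ltac:(lia)).
  destruct (least_ex (fun m => D n m <= eps_c)) as [m [Hm1 Hm2]].
  { exists (q n). lra. }
  assert (Hl : isleast n m) by (split; auto).
  assert (Hsp : isleast n (epsilon (inhabits 1%nat) (isleast n))).
  { apply epsilon_spec. exists m; auto. }
  destruct Hsp as [Hs1 Hs2].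
  set (s0 := epsilon (inhabits 1%nat) (isleast n)) in *.
  assert (Hps : (p n < s0)%nat).
  { destruct (Nat.lt_ge_cases (p n) s0) as [|Hge]; auto.
    exfalso. pose proof (mono_le (D n) (Hmon n) s0 (p n) Hge).
    assert (eps_c < delta) by (unfold eps_c; apply Rmin_case_strong; intros; lra). lra. }
  assert (Hsq : (s0 <= q n)%nat).
  { destruct (Nat.le_gt_cases s0 (q n)) as [|Hgt]; auto. exfalso. apply (Hs2 (q n)); auto. lra. }
  unfold sstar. fold s0. replace (max 1 s0) with s0 by lia.
  repeat split; auto.
Qed.

Lemma core_main :
  (forall n, (1 <= sstar n)%nat) /\
  (forall K, exists n0, forall n, (n0 <= n)%nat -> (K <= sstar n)%nat) /\
  forall a, 0 < a < 1 ->
   (forall eta, 0 < eta -> exists n0, forall n, (n0 <= n)%nat ->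
      forall m, (1 + a) * INR (sstar n) <= INR m -> D n m <= eta) /\
   (forall M, exists n0, forall n, (n0 <= n)%nat ->
      forall m, INR m <= (1 - a) * INR (sstar n) -> M <= D n m).
Proof.
  assert (He : 0 < eps_c) by (unfold eps_c; apply Rmin_case; lra).
  assert (He1 : eps_c <= 1/2) by (unfold eps_c; apply Rmin_case_strong; intros; lra).
  destruct core_good as [ng Hg].
  destruct Hratio as [R00 [nr Hr0]].
  set (R0 := Rmax R00 0). assert (HR0 : 0 <= R0) by apply Rmax_r.
  assert (Hr : forall n, (nr <= n)%nat -> INR (q n) <= R0 * INR (p n)).
  { intros n Hn. specialize (Hr0 n Hn). pose proof (pos_INR (p n)).
    assert (R00 <= R0) by apply Rmax_l. nra. }
  split; [intros n; unfold sstar; lia|].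
  split.
  { intros K. destruct (Hpinf K) as [n0 H0]. exists (max n0 ng). intros n Hn.
    specialize (H0 n ltac:(lia)). destruct (Hg n ltac:(lia)) as [_ [? _]]. lia. }
  intros a Ha. split.
  - intros eta Heta.
    set (e' := Rmin eta (1/2)).
    assert (He' : 0 < e' <= 1/2) by (unfold e'; apply Rmin_case_strong; intros; lra).
    assert (He'2 : e' <= eta) by (unfold e'; apply Rmin_l).
    destruct (nat_above (R0 / a)) as [C HC].
    assert (HeC : 0 < e' ^ C) by (apply pow_lt; lra).
    destruct (cv0_below _ (Rmin e' (e' ^ C)) Hq ltac:(apply Rmin_case; lra)) as [nq Hnq].
    exists (max ng (max nr nq)). intros n Hn m Hm.
    destruct (Hg n ltac:(lia)) as [[Hs1 Hs2] [Hps [Hsq Hp1]]].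
    specialize (Hr n ltac:(lia)). specialize (Hnq n ltac:(lia)).
    set (s := sstar n) in *.
    assert (HDq1 : D n (q n) < e') by (pose proof (Rmin_l e' (e'^C)); lra).
    assert (HDq2 : D n (q n) < e' ^ C) by (pose proof (Rmin_r e' (e'^C)); lra).
    assert (Hs1R : 1 <= INR s) by (apply (le_INR 1); lia).
    assert (HpsR : INR (p n) <= INR s) by (apply le_INR; lia).
    destruct (Nat.le_gt_cases (q n) m) as [Hqm|Hqm].
    { pose proof (mono_le (D n) (Hmon n) _ _ Hqm). lra. }
    destruct (Rle_lt_dec (D n m) e') as [|Hbig]; [lra|]. exfalso.
    assert (Hsm : (s <= m)%nat).
    { apply INR_le. nra. }
    pose proof (chord (D n) (HD0 n) (Hmon n) (Hcvx n) s m (q n) ltac:(lia)) as Hch.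
    set (w := (m - s)%nat) in *.
    assert (HwR : a * INR s <= INR w) by (unfold w; rewrite minus_INR by lia; nra).
    assert (Hw1 : (1 <= w)%nat).
    { destruct w as [|w']; [simpl in HwR; nra|lia]. }
    assert (HC0 : 0 <= INR C) by apply pos_INR.
    assert (HqC : (q n - s <= C * w)%nat).
    { apply INR_le. rewrite minus_INR by lia. rewrite mult_INR.
      assert (R0 * INR s = (R0 / a) * (a * INR s)) by (field; lra).
      assert (0 <= a * INR s) by nra.
      assert ((R0 / a) * (a * INR s) <= INR C * (a * INR s)) by (apply Rmult_le_compat_r; lra).
      assert (INR C * (a * INR s) <= INR C * INR w) by (apply Rmult_le_compat_l; lra).
      assert (R0 * INR (p n) <= R0 * INR s) by (apply Rmult_le_compat_l; auto).
      nra. }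
    assert (HD1 : D n s ^ (q n - m) <= 1) by (apply pow_le_1'; split; [apply HD0|lra]).
    assert (HDm : e' ^ (q n - s) <= D n m ^ (q n - s)) by (apply pow_incr; lra).
    assert (HDq0 : 0 <= D n (q n) ^ w) by (apply pow_le, HD0).
    assert (X1 : e' ^ (q n - s) <= D n (q n) ^ w).
    { assert (D n s ^ (q n - m) * D n (q n) ^ w <= 1 * D n (q n) ^ w)
        by (apply Rmult_le_compat_r; auto). lra. }
    assert (X2 : e' ^ (C * w) <= e' ^ (q n - s)) by (apply pow_le_1_decr; auto; lra).
    rewrite pow_mult in X2.
    assert (X3 : e' ^ C <= D n (q n)).
    { apply (pow_inv_le _ _ w); [apply pow_le; lra|apply HD0|exact Hw1|lra]. }
    lra.
  - intros M.
    set (M' := Rmax M 1).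
    assert (HM' : 1 <= M') by (unfold M'; apply Rmax_r).
    assert (HMM : M <= M') by (unfold M'; apply Rmax_l).
    destruct (nat_above (2 * (R0 + 1) / a)) as [C HC].
    assert (HC0 : 0 <= INR C) by apply pos_INR.
    assert (HMC : 0 < M' ^ C) by (apply pow_lt; lra).
    set (thr := eps_c ^ (C + 1) / M' ^ C).
    assert (Hthr : 0 < thr) by (unfold thr; apply Rdiv_lt_0_compat; [apply pow_lt|]; lra).
    destruct (cv0_below _ thr Hq Hthr) as [nq Hnq].
    destruct (nat_above (2 / a)) as [K2 HK2].
    destruct (Hpinf K2) as [nk Hnk].
    exists (max ng (max nr (max nq nk))). intros n Hn m Hm.
    destruct (Hg n ltac:(lia)) as [[Hs1 Hs2] [Hps [Hsq Hp1]]].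
    specialize (Hr n ltac:(lia)). specialize (Hnq n ltac:(lia)). specialize (Hnk n ltac:(lia)).
    set (s := sstar n) in *.
    assert (Hs1R : 1 <= INR s) by (apply (le_INR 1); lia).
    assert (HpsR : INR (p n) <= INR s) by (apply le_INR; lia).
    assert (HK2R : INR K2 <= INR (p n)) by (apply le_INR; lia).
    assert (Has : 2 <= a * INR s).
    { assert (2 / a * a = 2) by (field; lra). nra. }
    destruct (Rle_lt_dec M' (D n m)) as [|Hsmall]; [lra|]. exfalso.
    set (j := (s - 1)%nat).
    assert (Hmj : (m <= j)%nat).
    { apply INR_le. unfold j. rewrite minus_INR by lia. simpl. nra. }
    assert (Hjq : (j <= q n)%nat) by (unfold j; lia).
    pose proof (chord (D n) (HD0 n) (Hmon n) (Hcvx n) m j (q n) ltac:(lia)) as Hch.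
    assert (Hej : eps_c < D n j).
    { destruct (Rle_lt_dec (D n j) eps_c) as [Hc|]; auto. exfalso. apply (Hs2 j); auto. unfold j; lia. }
    set (u := (q n - j)%nat) in *. set (v := (j - m)%nat) in *.
    assert (HvR : a * INR s / 2 <= INR v).
    { unfold v, j. rewrite !minus_INR by lia. simpl. nra. }
    assert (Hv1 : (1 <= v)%nat).
    { destruct v as [|v']; [simpl in HvR; nra|lia]. }
    assert (Huv : (u <= C * v)%nat).
    { apply INR_le. unfold u, j. rewrite !minus_INR by lia. rewrite mult_INR. fold v. simpl.
      assert ((R0 + 1) * INR s = (2 * (R0 + 1) / a) * (a * INR s / 2)) by (field; lra).
      assert (0 <= a * INR s / 2) by nra.
      assert ((2 * (R0 + 1) / a) * (a * INR s / 2) <= INR C * (a * INR s / 2)) by (apply Rmult_le_compat_r; lra).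
      assert (INR C * (a * INR s / 2) <= INR C * INR v) by (apply Rmult_le_compat_l; lra).
      assert (R0 * INR (p n) <= R0 * INR s) by (apply Rmult_le_compat_l; auto).
      nra. }
    replace (q n - m)%nat with (u + v)%nat in Hch by (unfold u, v; lia).
    assert (Y1 : eps_c ^ (u + v) <= D n j ^ (u + v)) by (apply pow_incr; lra).
    assert (Y2 : D n m ^ u <= M' ^ u) by (apply pow_incr; split; [apply HD0|lra]).
    assert (Y3 : M' ^ u <= M' ^ (C * v)) by (apply Rle_pow; auto).
    assert (HDq0 : 0 <= D n (q n) ^ v) by (apply pow_le, HD0).
    assert (Y4 : eps_c ^ (C * v + v) <= eps_c ^ (u + v)) by (apply pow_le_1_decr; [lra|lia]).
    assert (Y5 : eps_c ^ (C * v + v) <= M' ^ (C * v) * D n (q n) ^ v).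
    { assert (D n m ^ u * D n (q n) ^ v <= M' ^ (C * v) * D n (q n) ^ v)
        by (apply Rmult_le_compat_r; lra). lra. }
    replace (C * v + v)%nat with ((C + 1) * v)%nat in Y5 by lia.
    rewrite !pow_mult, <- Rpow_mult_distr in Y5.
    assert (Y6 : eps_c ^ (C + 1) <= M' ^ C * D n (q n)).
    { apply (pow_inv_le _ _ v); [apply pow_le; lra|apply Rmult_le_pos; [lra|apply HD0]|exact Hv1|lra]. }
    unfold thr in Hnq.
    assert (D n (q n) * M' ^ C < eps_c ^ (C + 1)).
    { apply (Rmult_lt_compat_r (M' ^ C)) in Hnq; auto.
      replace (eps_c ^ (C + 1) / M' ^ C * M' ^ C) with (eps_c ^ (C + 1)) in Hnq by (field; lra). auto. }
    lra.
Qed.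
End Core.

Lemma nfloor_spec (x : R) : 0 <= x -> INR (nfloor x) <= x /\ x < INR (nfloor x) + 1.
Proof.
  intros Hx. unfold nfloor. destruct (base_Int_part x) as [H1 H2].
  assert (Hz : (0 <= Int_part x)%Z).
  { destruct (archimed x). assert (0 < up x)%Z by (apply lt_IZR; lra).
    unfold Int_part. lia. }
  rewrite INR_IZR_INZ, Znat.Z2Nat.id by auto. lra.
Qed.

Lemma nceil_spec (x : R) : 0 <= x -> x <= INR (nceil x) /\ INR (nceil x) < x + 1.
Proof.
  intros Hx. unfold nceil. destruct (base_Int_part (- x)) as [H1 H2].
  assert (Hz : (0 <= - Int_part (- x))%Z).
  { assert (Int_part (- x) < 1)%Z by (apply lt_IZR; simpl; lra). lia. }
  rewrite INR_IZR_INZ, Znat.Z2Nat.id by auto. rewrite opp_IZR. lra.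
Qed.

Lemma pq_good (T : nat -> R) (A B : R) :
  0 < A -> A < B -> (forall n, 0 < T n) ->
  (forall X, exists n0, forall n, (n0 <= n)%nat -> X <= T n) ->
  (forall K, exists n0, forall n, (n0 <= n)%nat -> (K <= nfloor (A * T n))%nat) /\
  (exists R0 n0, forall n, (n0 <= n)%nat -> INR (nceil (B * T n)) <= R0 * INR (nfloor (A * T n))).
Proof.
  intros HA HAB HT Hinf. split.
  - intros K. destruct (Hinf ((INR K + 1) / A)) as [n0 H0]. exists n0. intros n Hn.
    specialize (H0 n Hn). pose proof (HT n).
    destruct (nfloor_spec (A * T n)) as [_ H2]; [nra|].
    apply INR_le. assert (INR K + 1 <= A * T n).
    { assert ((INR K + 1) / A * A = INR K + 1) by (field; lra).
      assert ((INR K + 1) / A * A <= T n * A) by (apply Rmult_le_compat_r; lra). nra. }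
    lra.
  - exists (4 * B / A). destruct (Hinf (2 / A)) as [n0 H0]. exists n0. intros n Hn.
    specialize (H0 n Hn). pose proof (HT n).
    destruct (nfloor_spec (A * T n)) as [_ H2]; [nra|].
    destruct (nceil_spec (B * T n)) as [_ H3]; [nra|].
    assert (HAT : 2 <= A * T n).
    { assert (2 / A * A = 2) by (field; lra).
      assert (2 / A * A <= T n * A) by (apply Rmult_le_compat_r; lra). nra. }
    assert (HBT : 2 <= B * T n) by nra.
    assert (A * T n / 2 <= INR (nfloor (A * T n))) by lra.
    assert (INR (nceil (B * T n)) <= 2 * (B * T n)) by lra.
    assert (2 * (B * T n) = 4 * B / A * (A * T n / 2)) by (field; lra).
    assert (0 <= 4 * B / A) by (apply Rmult_le_pos; [lra|left; apply Rinv_0_lt_compat; lra]).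
    assert (4 * B / A * (A * T n / 2) <= 4 * B / A * INR (nfloor (A * T n)))
      by (apply Rmult_le_compat_l; lra).
    lra.
Qed.

Theorem disc_abstract (d : nat -> nat -> R) (eps0 : R) :
  (forall n m, 0 <= d n m) -> (forall n m, d n (S m) <= d n m) ->
  (forall n m, d n (S m) ^ 2 <= d n m * d n (S (S m))) ->
  0 < eps0 -> T2_disc_to_infty d eps0 ->
  (cutoff_disc d <-> precutoff_disc d).
Proof.
  intros HD0 Hmon Hcvx He0 HT2. split.
  - intros [tn [Htn Hc]]. exists tn, (1 - /2), (1 + /2). repeat split; auto; try lra.
    + apply (Hc (/2)). lra.
    + destruct (Hc (/2) ltac:(lra)) as [_ Hinf]. exists 1. split; [lra|].
      destruct (Hinf 1) as [n0 H0]. exists n0. intros n Hn. left. auto.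
  - intros [tn [A [B [Htn [HA [HAB [Hq [c' [Hc' [n1 Hp]]]]]]]]]].
    assert (Htinf : forall X, exists n0, forall n, (n0 <= n)%nat -> X <= tn n).
    { intros X. destruct (nat_above (B * X)) as [M HM].
      destruct (HT2 M) as [n2 H2].
      destruct (cv0_below _ eps0 Hq He0) as [n3 H3].
      exists (max n2 n3). intros n Hn. specialize (H2 n ltac:(lia)). specialize (H3 n ltac:(lia)).
      destruct (Rle_lt_dec X (tn n)) as [|Hlt]; auto. exfalso.
      pose proof (Htn n).
      destruct (nceil_spec (B * tn n)) as [_ Hc2]; [nra|].
      assert (HnM : (nceil (B * tn n) <= M)%nat).
      { assert (Hlt2 : INR (nceil (B * tn n)) < INR (S M)).
        { rewrite S_INR. assert (B * tn n < B * X) by (apply Rmult_lt_compat_l; lra). lra. }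
        apply INR_lt in Hlt2. lia. }
      specialize (H2 _ HnM). lra. }
    destruct (pq_good tn A B HA HAB Htn Htinf) as [Hpinf Hratio].
    destruct (core_main d HD0 Hmon Hcvx (fun n => nfloor (A * tn n)) (fun n => nceil (B * tn n)) c'
               Hc' (ex_intro _ n1 Hp) Hq Hpinf Hratio) as [Hs1 [Hsinf Hcut]].
    set (s := sstar d c') in *.
    exists (fun n => INR (s n)). split.
    { intros n. apply lt_0_INR. specialize (Hs1 n). lia. }
    intros a Ha. destruct (Hcut a Ha) as [Hup Hlow]. split.
    + intros e He. destruct (Hup (e / 2) ltac:(lra)) as [n0 H0]. exists n0. intros n Hn.
      unfold R_dist. rewrite Rminus_0_r. rewrite Rabs_right by (apply Rle_ge, HD0).
      assert (d n (nceil ((1 + a) * INR (s n))) <= e / 2); [|lra].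
      apply H0; auto. apply nceil_spec. pose proof (pos_INR (s n)). nra.
    + intros M. destruct (Hlow (M + 1)) as [n0 H0]. exists n0. intros n Hn.
      assert (M + 1 <= d n (nfloor ((1 - a) * INR (s n)))); [|lra].
      apply H0; auto. apply nfloor_spec. pose proof (pos_INR (s n)). nra.
Qed.

Theorem cont_abstract (d : nat -> R -> R) :
  (forall n t, 0 <= d n t) ->
  (forall n s t, 0 <= s <= t -> d n t <= d n s) ->
  (forall n t h, 0 <= t -> 0 < h -> d n (t + h) ^ 2 <= d n t * d n (t + 2 * h)) ->
  (cutoff_cont d <-> precutoff_cont d).
Proof.
  intros HD0 Hmon Hcvx. split.
  - intros [tn [Htn Hc]]. exists tn, (1 - /2), (1 + /2). repeat split; auto; try lra.
    + apply (Hc (/2)). lra.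
    + destruct (Hc (/2) ltac:(lra)) as [_ Hinf]. exists 1. split; [lra|].
      destruct (Hinf 1) as [n0 H0]. exists n0. intros n Hn. left. auto.
  - intros [tn [A [B [Htn [HA [HAB [Hq [c' [Hc' [n1 Hp]]]]]]]]]].
    set (h := fun n => tn n / INR (S n)).
    assert (Hh : forall n, 0 < h n).
    { intros n. unfold h. apply Rdiv_lt_0_compat; auto. apply lt_0_INR. lia. }
    assert (Hhn : forall n x, h n * (x * INR (S n)) = x * tn n).
    { intros n x. unfold h. field. apply not_0_INR. lia. }
    set (E := fun n m => d n (h n * INR m)).
    assert (HE0 : forall n m, 0 <= E n m) by (intros; apply HD0).
    assert (HEmon : forall n m, E n (S m) <= E n m).
    { intros n m. unfold E. apply Hmon. pose proof (Hh n). pose proof (pos_INR m).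
      rewrite S_INR. nra. }
    assert (HEcvx : forall n m, E n (S m) ^ 2 <= E n m * E n (S (S m))).
    { intros n m. unfold E. pose proof (Hh n). pose proof (pos_INR m).
      replace (h n * INR (S m)) with (h n * INR m + h n) by (rewrite S_INR; ring).
      replace (h n * INR (S (S m))) with (h n * INR m + 2 * h n) by (rewrite !S_INR; ring).
      apply Hcvx; nra. }
    set (T := fun n => INR (S n)).
    assert (HT : forall n, 0 < T n) by (intros; apply lt_0_INR; lia).
    assert (HTinf : forall X, exists n0, forall n, (n0 <= n)%nat -> X <= T n).
    { intros X. destruct (nat_above X) as [k Hk]. exists k. intros n Hn. unfold T.
      apply le_INR in Hn. rewrite S_INR. lra. }
    destruct (pq_good T A B HA HAB HT HTinf) as [Hpinf Hratio].
    assert (Hp' : exists n0, forall n, (n0 <= n)%nat -> c' <= E n (nfloor (A * T n))).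
    { exists n1. intros n Hn. apply Rle_trans with (d n (A * tn n)); [apply Hp; auto|]. unfold E.
      apply Hmon. pose proof (Hh n). pose proof (HT n).
      destruct (nfloor_spec (A * T n)) as [H1 _]; [nra|].
      split; [apply Rmult_le_pos; [lra|apply pos_INR]|].
      rewrite <- (Hhn n A). fold (T n). apply Rmult_le_compat_l; lra. }
    assert (Hq' : Un_cv (fun n => E n (nceil (B * T n))) 0).
    { intros e He. destruct (Hq e He) as [n0 H0]. exists n0. intros n Hn.
      specialize (H0 n Hn). unfold R_dist in *. rewrite Rminus_0_r in *.
      pose proof (HD0 n (B * tn n)).
      rewrite Rabs_right in H0 by lra. unfold E. rewrite Rabs_right by (apply Rle_ge, HD0).
      eapply Rle_lt_trans; [|apply H0]. apply Hmon. pose proof (Hh n). pose proof (HT n).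
      pose proof (Htn n).
      destruct (nceil_spec (B * T n)) as [Hc1 _]; [nra|].
      split; [nra|]. rewrite <- (Hhn n B). fold (T n). apply Rmult_le_compat_l; lra. }
    destruct (core_main E HE0 HEmon HEcvx (fun n => nfloor (A * T n)) (fun n => nceil (B * T n)) c'
               Hc' Hp' Hq' Hpinf Hratio) as [Hs1 [Hsinf Hcut]].
    set (s := sstar E c') in *.
    exists (fun n => h n * INR (s n)). split.
    { intros n. apply Rmult_lt_0_compat; auto. apply lt_0_INR. specialize (Hs1 n). lia. }
    intros a Ha. destruct (Hcut (a / 2) ltac:(lra)) as [Hup Hlow].
    destruct (nat_above (2 / a)) as [K HK]. destruct (Hsinf K) as [nk Hnk].
    assert (HsK : forall n, (nk <= n)%nat -> 2 <= a * INR (s n)).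
    { intros n Hn. specialize (Hnk n Hn). apply le_INR in Hnk.
      assert (2 / a * a = 2) by (field; lra). nra. }
    split.
    + intros e He. destruct (Hup (e / 2) ltac:(lra)) as [n0 H0]. exists (max n0 nk). intros n Hn.
      unfold R_dist. rewrite Rminus_0_r. rewrite Rabs_right by (apply Rle_ge, HD0).
      specialize (HsK n ltac:(lia)). pose proof (pos_INR (s n)). pose proof (Hh n).
      destruct (nfloor_spec ((1 + a) * INR (s n))) as [F1 F2]; [nra|].
      assert (HE3 : E n (nfloor ((1 + a) * INR (s n))) <= e / 2).
      { apply H0; [lia|]. lra. }
      unfold E in HE3. assert (d n ((1 + a) * (h n * INR (s n))) <= e / 2); [|lra].
      eapply Rle_trans; [|apply HE3]. apply Hmon. split; [apply Rmult_le_pos; [lra|apply pos_INR]|].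
      replace ((1 + a) * (h n * INR (s n))) with (h n * ((1 + a) * INR (s n))) by ring.
      apply Rmult_le_compat_l; lra.
    + intros M. destruct (Hlow (M + 1)) as [n0 H0]. exists (max n0 nk). intros n Hn.
      specialize (HsK n ltac:(lia)). pose proof (pos_INR (s n)). pose proof (Hh n).
      destruct (nceil_spec ((1 - a) * INR (s n))) as [F1 F2]; [nra|].
      assert (HE3 : M + 1 <= E n (nceil ((1 - a) * INR (s n)))).
      { apply H0; [lia|]. lra. }
      unfold E in HE3. assert (M + 1 <= d n ((1 - a) * (h n * INR (s n)))); [|lra].
      eapply Rle_trans; [apply HE3|]. apply Hmon. split; [apply Rmult_le_pos; [lra|apply Rmult_le_pos; lra]|].
      replace ((1 - a) * (h n * INR (s n))) with (h n * ((1 - a) * INR (s n))) by ring.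
      apply Rmult_le_compat_l; lra.
Qed.

Lemma fsum_ext N f g : (forall x, (x < N)%nat -> f x = g x) -> fsum N f = fsum N g.
Proof. induction N as [|N IHN]; simpl; intros H; auto. rewrite IHN by (intros; apply H; lia). rewrite (H N) by lia. auto. Qed.

Lemma fsum_plus N f g : fsum N (fun x => f x + g x) = fsum N f + fsum N g.
Proof. induction N as [|N IHN]; simpl; [lra|]. rewrite IHN. lra. Qed.

Lemma fsum_scal_l N c f : fsum N (fun x => c * f x) = c * fsum N f.
Proof. induction N as [|N IHN]; simpl; [lra|]. rewrite IHN. lra. Qed.

Lemma fsum_scal_r N c f : fsum N (fun x => f x * c) = fsum N f * c.
Proof. induction N as [|N IHN]; simpl; [lra|]. rewrite IHN. lra. Qed.

Lemma fsum_zero N : fsum N (fun _ => 0) = 0.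
Proof. induction N as [|N IHN]; simpl; [lra|]. rewrite IHN. lra. Qed.

Lemma fsum_swap N M (f : nat -> nat -> R) :
  fsum N (fun x => fsum M (fun y => f x y)) = fsum M (fun y => fsum N (fun x => f x y)).
Proof.
  induction N as [|N IHN]; simpl.
  - rewrite fsum_zero. auto.
  - rewrite IHN. rewrite <- fsum_plus. auto.
Qed.

Lemma fsum_le N f g : (forall x, (x < N)%nat -> f x <= g x) -> fsum N f <= fsum N g.
Proof. induction N as [|N IHN]; simpl; intros H; [lra|]. pose proof (H N ltac:(lia)). pose proof (IHN ltac:(intros; apply H; lia)). lra. Qed.

Lemma fsum_nonneg N f : (forall x, (x < N)%nat -> 0 <= f x) -> 0 <= fsum N f.
Proof. intros H. rewrite <- (fsum_zero N). apply fsum_le. auto. Qed.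

Lemma fsum_matid_r N f y : (y < N)%nat -> fsum N (fun z => f z * matid z y) = f y.
Proof.
  induction N as [|N IHN]; intros Hy; [lia|]. simpl. unfold matid at 2.
  destruct (Nat.eqb N y) eqn:E.
  - apply Nat.eqb_eq in E. subst y.
    rewrite (fsum_ext _ _ (fun _ => 0)). { rewrite fsum_zero. lra. }
    intros x Hx. unfold matid. destruct (Nat.eqb x N) eqn:E2; [apply Nat.eqb_eq in E2; lia|lra].
  - apply Nat.eqb_neq in E. rewrite IHN by lia. lra.
Qed.

Lemma fsum_matid_l N f x : (x < N)%nat -> fsum N (fun z => matid x z * f z) = f x.
Proof.
  intros Hx. rewrite <- (fsum_matid_r N f x Hx). apply fsum_ext. intros z Hz.
  unfold matid. rewrite Nat.eqb_sym. lra.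
Qed.

Lemma fsum_pos_witness N f : fsum N f <> 0 -> exists x, (x < N)%nat /\ f x <> 0.
Proof.
  intros H. apply NNPP. intro Hno. apply H. rewrite (fsum_ext _ _ (fun _ => 0)).
  - apply fsum_zero.
  - intros x Hx. apply NNPP. intro Hf. apply Hno. exists x; auto.
Qed.

Lemma fsum_CS N a u v : (forall x, (x < N)%nat -> 0 <= a x) ->
  fsum N (fun x => a x * u x * v x) ^ 2 <=
  fsum N (fun x => a x * u x * u x) * fsum N (fun x => a x * v x * v x).
Proof.
  intros Ha.
  set (P := fsum N (fun x => a x * u x * u x)).
  set (Q := fsum N (fun x => a x * u x * v x)).
  set (R0 := fsum N (fun x => a x * v x * v x)).
  assert (Hq : forall l, 0 <= P - 2 * l * Q + l * l * R0).
  { intros l.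
    assert (E : P - 2 * l * Q + l * l * R0 = fsum N (fun x => a x * (u x - l * v x) * (u x - l * v x))).
    { rewrite (fsum_ext _ _ (fun x => (a x * u x * u x + (-2 * l) * (a x * u x * v x)) + (l * l) * (a x * v x * v x)))
        by (intros; ring).
      rewrite !fsum_plus, !fsum_scal_l. unfold P, Q, R0. ring. }
    rewrite E. apply fsum_nonneg. intros x Hx. specialize (Ha x Hx). rewrite Rmult_assoc. apply Rmult_le_pos; auto. apply Rle_0_sqr. }
  assert (HP : 0 <= P) by (unfold P; apply fsum_nonneg; intros x Hx; specialize (Ha x Hx); rewrite Rmult_assoc; apply Rmult_le_pos; auto; apply Rle_0_sqr).
  assert (HR : 0 <= R0) by (unfold R0; apply fsum_nonneg; intros x Hx; specialize (Ha x Hx); rewrite Rmult_assoc; apply Rmult_le_pos; auto; apply Rle_0_sqr).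
  destruct (Rle_lt_dec R0 0) as [HR0|HR0].
  - assert (R0 = 0) by lra. subst. rewrite H in Hq.
    destruct (Req_dec Q 0) as [HQ|HQ].
    + rewrite HQ. rewrite H. nra.
    + exfalso. specialize (Hq ((P + 1) / (2 * Q))).
      replace (P - 2 * ((P + 1) / (2 * Q)) * Q + (P + 1) / (2 * Q) * ((P + 1) / (2 * Q)) * 0)
        with (-1) in Hq by (field; auto). lra.
  - specialize (Hq (Q / R0)).
    replace (P - 2 * (Q / R0) * Q + Q / R0 * (Q / R0) * R0) with (P - Q * Q / R0) in Hq by (field; lra).
    assert (Q * Q / R0 <= P) by lra.
    assert (Q * Q <= P * R0).
    { apply (Rmult_le_compat_r R0) in H; [|lra].
      replace (Q * Q / R0 * R0) with (Q * Q) in H by (field; lra). auto. }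
    simpl. lra.
Qed.

Lemma pi_pos N A pi : irreducible N A -> reversible N A pi -> is_prob N pi ->
  forall x, (x < N)%nat -> 0 < pi x.
Proof.
  intros [HN Hirr] Hrev [Hpi0 Hpi1] y Hy.
  destruct (fsum_pos_witness N pi ltac:(lra)) as [x0 [Hx0 Hpx0]].
  assert (Hx0p : 0 < pi x0) by (specialize (Hpi0 x0 Hx0); lra).
  specialize (Hirr x0 y Hx0 Hy).
  assert (G : forall u v, clos_refl_trans nat (fun u v => (u < N)%nat /\ (v < N)%nat /\ u <> v /\ 0 < A u v) u v ->
            (u < N)%nat /\ 0 < pi u -> (v < N)%nat /\ 0 < pi v).
  { intros u v Huv. induction Huv as [u v [Hu [Hv [_ Ha]]]| |]; intros [Hu' Hpu]; auto.
    split; auto. specialize (Hrev u v Hu Hv). specialize (Hpi0 v Hv).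
    assert (0 < pi u * A u v) by (apply Rmult_lt_0_compat; auto).
    destruct (Rle_lt_dec (pi v) 0); auto. assert (pi v = 0) by lra. rewrite H0 in Hrev. lra. }
  apply (G x0 y Hirr). auto.
Qed.

(* ---------- log-convexity of L2 distance along a reversible kernel ---------- *)
Section KSeq.
Variable N : nat.
Variable P : nat -> nat -> R.
Variable pi : nat -> R.
Hypothesis Hpi : forall x, (x < N)%nat -> 0 < pi x.
Hypothesis HP0 : forall x y, (x < N)%nat -> (y < N)%nat -> 0 <= P x y.
Hypothesis HP1 : forall x, (x < N)%nat -> fsum N (P x) = 1.
Hypothesis Hrev : forall x y, (x < N)%nat -> (y < N)%nat -> pi x * P x y = pi y * P y x.
Variable nu : nat -> nat -> R.
Hypothesis Hnu : forall m y, (y < N)%nat -> nu (S m) y = vecmat N (nu m) P y.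

Definition ip (u v : nat -> R) := fsum N (fun y => pi y * u y * v y).
Definition Pop (u : nat -> R) (y : nat) := fsum N (fun x => P y x * u x).
Definition ww m y := nu m y / pi y - 1.

Lemma ip_ext u u' v v' : (forall y, (y < N)%nat -> u y = u' y) -> (forall y, (y < N)%nat -> v y = v' y) ->
  ip u v = ip u' v'.
Proof. intros H1 H2. unfold ip. apply fsum_ext. intros y Hy. rewrite H1, H2; auto. Qed.

Lemma ww_S m y : (y < N)%nat -> ww (S m) y = Pop (ww m) y.
Proof.
  intros Hy. unfold ww, Pop. rewrite Hnu by auto. unfold vecmat.
  pose proof (Hpi y Hy).
  rewrite (fsum_ext _ (fun x => nu m x * P x y) (fun x => pi y * (P y x * (nu m x / pi x - 1)) + pi y * P y x)).
  - rewrite fsum_plus, !fsum_scal_l. rewrite HP1 by auto. field. lra.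
  - intros x Hx. pose proof (Hpi x Hx). specialize (Hrev x y Hx Hy).
    replace (nu m x * P x y) with ((nu m x / pi x) * (pi x * P x y)) by (field; lra).
    rewrite Hrev. ring.
Qed.

Lemma Pop_selfadj u v : ip (Pop u) v = ip u (Pop v).
Proof.
  unfold ip, Pop.
  rewrite (fsum_ext _ _ (fun y => fsum N (fun x => pi y * P y x * u x * v y))).
  2:{ intros y Hy. rewrite <- fsum_scal_l, <- fsum_scal_r. apply fsum_ext. intros; ring. }
  rewrite fsum_swap. apply fsum_ext. intros x Hx.
  rewrite <- fsum_scal_l. apply fsum_ext. intros y Hy. rewrite <- (Hrev x y Hx Hy). ring.
Qed.

Lemma Pop_contr u : ip (Pop u) (Pop u) <= ip u u.
Proof.
  unfold ip at 1.
  apply Rle_trans with (fsum N (fun y => pi y * fsum N (fun x => P y x * u x * u x))).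
  - apply fsum_le. intros y Hy. pose proof (Hpi y Hy).
    rewrite Rmult_assoc. apply Rmult_le_compat_l; [lra|].
    pose proof (fsum_CS N (P y) u (fun _ => 1) (fun x Hx => HP0 y x Hy Hx)) as HCS.
    rewrite (fsum_ext _ (fun x => P y x * 1 * 1) (P y)) in HCS by (intros; ring).
    rewrite HP1 in HCS by auto.
    unfold Pop. rewrite (fsum_ext _ (fun x => P y x * u x * 1) (fun x => P y x * u x)) in HCS by (intros; ring).
    simpl in HCS. lra.
  - unfold ip. rewrite (fsum_ext _ _ (fun y => fsum N (fun x => pi y * P y x * (u x * u x)))).
    2:{ intros y Hy. rewrite <- fsum_scal_l. apply fsum_ext. intros; ring. }
    rewrite fsum_swap. apply Req_le. apply fsum_ext. intros x Hx.
    rewrite fsum_scal_r. rewrite (fsum_ext _ _ (fun y => pi x * P x y)).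
    + rewrite fsum_scal_l, HP1 by auto. ring.
    + intros y Hy. rewrite Hrev; auto.
Qed.

Lemma ip_CS u v : ip u v <= sqrt (ip u u) * sqrt (ip v v).
Proof.
  pose proof (fsum_CS N pi u v (fun x Hx => Rlt_le _ _ (Hpi x Hx))) as H.
  fold (ip u v) (ip u u) (ip v v) in H.
  assert (Hu : 0 <= ip u u) by (apply fsum_nonneg; intros x Hx; pose proof (Hpi x Hx); nra).
  assert (Hv : 0 <= ip v v) by (apply fsum_nonneg; intros x Hx; pose proof (Hpi x Hx); nra).
  destruct (Rle_lt_dec (ip u v) 0).
  - apply Rle_trans with 0; auto. apply Rmult_le_pos; apply sqrt_pos.
  - rewrite <- sqrt_mult by auto. rewrite <- (sqrt_pow2 (ip u v)) by lra.
    apply sqrt_le_1_alt. auto.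
Qed.

Definition DD m := l2dist N (nu m) pi.

Lemma DD_ip m : DD m = sqrt (ip (ww m) (ww m)).
Proof. unfold DD, l2dist, ip, ww. f_equal. apply fsum_ext. intros; ring. Qed.

Lemma DD_nonneg m : 0 <= DD m.
Proof. unfold DD, l2dist. apply sqrt_pos. Qed.

Lemma DD_mon m : DD (S m) <= DD m.
Proof.
  rewrite !DD_ip. apply sqrt_le_1_alt.
  rewrite (ip_ext _ (Pop (ww m)) _ (Pop (ww m))) by (intros; apply ww_S; auto).
  apply Pop_contr.
Qed.

Lemma DD_cvx m : DD (S m) ^ 2 <= DD m * DD (S (S m)).
Proof.
  rewrite !DD_ip.
  assert (H0 : 0 <= ip (ww (S m)) (ww (S m))) by (apply fsum_nonneg; intros x Hx; pose proof (Hpi x Hx); nra).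
  rewrite pow2_sqrt by auto.
  rewrite (ip_ext _ (Pop (ww m)) _ (Pop (ww m))) by (intros; apply ww_S; auto).
  rewrite Pop_selfadj.
  rewrite (ip_ext (ww m) (ww m) (Pop (Pop (ww m))) (ww (S (S m)))).
  - apply ip_CS.
  - auto.
  - intros y Hy. rewrite ww_S by auto. unfold Pop. apply fsum_ext. intros x Hx. rewrite ww_S; auto.
Qed.
End KSeq.

Lemma vecmat_pow_S N mu K m y :
  vecmat N mu (matpow N K (S m)) y = vecmat N (vecmat N mu (matpow N K m)) K y.
Proof.
  unfold vecmat. simpl. unfold matmul.
  rewrite (fsum_ext _ _ (fun x => fsum N (fun z => mu x * matpow N K m x z * K z y))).
  2:{ intros x Hx. rewrite <- fsum_scal_l. apply fsum_ext. intros; ring. }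
  rewrite fsum_swap. apply fsum_ext. intros z Hz. rewrite <- fsum_scal_r. auto.
Qed.

Lemma disc_props N K pi mu :
  is_kernel N K -> irreducible N K -> stationary_kernel N K pi -> reversible N K pi ->
  (forall m, 0 <= d2_disc N K pi mu m) /\
  (forall m, d2_disc N K pi mu (S m) <= d2_disc N K pi mu m) /\
  (forall m, d2_disc N K pi mu (S m) ^ 2 <= d2_disc N K pi mu m * d2_disc N K pi mu (S (S m))).
Proof.
  intros Hk Hirr [Hprob _] Hrev.
  pose proof (pi_pos N K pi Hirr Hrev Hprob) as Hpi.
  assert (HP0 : forall x y, (x < N)%nat -> (y < N)%nat -> 0 <= K x y) by (intros x y Hx Hy; apply (Hk x Hx); auto).
  assert (HP1 : forall x, (x < N)%nat -> fsum N (K x) = 1) by (intros x Hx; apply (Hk x Hx)).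
  set (nu := fun m => vecmat N mu (matpow N K m)).
  assert (Hnu : forall m y, (y < N)%nat -> nu (S m) y = vecmat N (nu m) K y)
    by (intros; unfold nu; apply vecmat_pow_S).
  split; [|split]; intros m.
  - apply (DD_nonneg N pi nu m).
  - apply (DD_mon N K pi Hpi HP0 HP1 Hrev nu Hnu m).
  - apply (DD_cvx N K pi Hpi HP1 Hrev nu Hnu m).
Qed.

Lemma fsum_abs N f : Rabs (fsum N f) <= fsum N (fun x => Rabs (f x)).
Proof.
  induction N as [|N IHN]; simpl.
  - rewrite Rabs_R0. lra.
  - eapply Rle_trans; [apply Rabs_triang|]. lra.
Qed.

Lemma fsum_term N f y : (y < N)%nat -> (forall x, (x < N)%nat -> 0 <= f x) -> f y <= fsum N f.
Proof.
  induction N as [|N IHN]; intros Hy Hf; [lia|]. simpl.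
  destruct (Nat.eq_dec y N) as [->|].
  - pose proof (fsum_nonneg N f ltac:(intros; apply Hf; lia)). lra.
  - pose proof (IHN ltac:(lia) ltac:(intros; apply Hf; lia)). pose proof (Hf N ltac:(lia)). lra.
Qed.

Lemma fsum_sum_f N (f : nat -> nat -> R) k :
  fsum N (fun z => sum_f_R0 (fun j => f z j) k) = sum_f_R0 (fun j => fsum N (fun z => f z j)) k.
Proof.
  induction k as [|k IH]; simpl; auto.
  rewrite fsum_plus, IH. auto.
Qed.

Lemma is_series_R_plus (a b : nat -> R) la lb :
  is_series a la -> is_series b lb -> is_series (fun n => a n + b n) (la + lb).
Proof. intros Ha Hb. apply (is_series_plus a b la lb Ha Hb). Qed.

Lemma is_series_R_scal (c : R) (a : nat -> R) l :
  is_series a l -> is_series (fun n => c * a n) (c * l).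
Proof. intros Ha. apply (is_series_scal_l c a l Ha). Qed.

Lemma is_series_zero : is_series (fun _ : nat => 0) 0.
Proof.
  apply is_series_Reals. intros e He. exists 0%nat. intros n _.
  unfold R_dist. replace (sum_f_R0 (fun _ => 0) n) with 0.
  - rewrite Rminus_0_r, Rabs_R0. auto.
  - induction n; simpl; [auto|]. rewrite <- IHn. ring.
Qed.

Lemma fsum_series N (a : nat -> nat -> R) (l : nat -> R) :
  (forall z, (z < N)%nat -> is_series (a z) (l z)) ->
  is_series (fun k => fsum N (fun z => a z k)) (fsum N l).
Proof.
  induction N as [|N IHN]; intros H; simpl.
  - apply is_series_zero.
  - apply is_series_R_plus; [apply IHN; intros; apply H; lia|apply H; lia].
Qed.

Lemma is_series_R_ext (a b : nat -> R) l : (forall n, a n = b n) -> is_series a l -> is_series b l.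
Proof. intros H Ha. apply (is_series_ext a b l H Ha). Qed.

Lemma is_series_uniq (a : nat -> R) l1 l2 : is_series a l1 -> is_series a l2 -> l1 = l2.
Proof. intros H1 H2. rewrite <- (is_series_unique a l1 H1). apply is_series_unique; auto. Qed.

Lemma is_series_nonneg (a : nat -> R) l : is_series a l -> (forall n, 0 <= a n) -> 0 <= l.
Proof.
  intros H Ha. apply is_series_Reals in H.
  apply Rle_cv_lim with (Un := fun _ => 0) (Vn := fun n => sum_f_R0 a n).
  - intros n. induction n; simpl; [apply Ha|]. specialize (Ha (S n)). lra.
  - intros e He. exists 0%nat. intros. unfold R_dist. rewrite Rminus_0_r, Rabs_R0. auto.
  - apply H.
Qed.

Lemma exp_series (x : R) : is_series (fun i => x ^ i / INR (fact i)) (exp x).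
Proof.
  apply is_series_Reals. pose proof (proj2_sig (exist_exp x)) as H. fold (exp x) in H.
  intros e He. destruct (H e He) as [n0 Hn0]. exists n0. intros n Hn.
  replace (sum_f_R0 (fun i => x ^ i / INR (fact i)) n) with (sum_f_R0 (fun i => / INR (fact i) * x ^ i) n).
  - apply Hn0; auto.
  - apply sum_eq. intros. unfold Rdiv. ring.
Qed.

Section Mat.
Variable N : nat.

Lemma matmul_assoc A B Cm x y :
  matmul N (matmul N A B) Cm x y = matmul N A (matmul N B Cm) x y.
Proof.
  unfold matmul.
  rewrite (fsum_ext _ _ (fun z => fsum N (fun w => A x w * B w z * Cm z y))).
  2:{ intros z Hz. rewrite <- fsum_scal_r. auto. }
  rewrite fsum_swap. apply fsum_ext. intros w Hw. rewrite <- fsum_scal_l. apply fsum_ext. intros; ring.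
Qed.

Lemma matpow_add A j i : forall x y, (y < N)%nat ->
  matpow N A (j + i) x y = matmul N (matpow N A j) (matpow N A i) x y.
Proof.
  induction i as [|i IH]; intros x y Hy.
  - rewrite Nat.add_0_r. simpl. unfold matmul. rewrite fsum_matid_r; auto.
  - rewrite Nat.add_succ_r. simpl. unfold matmul at 1.
    rewrite (fsum_ext _ _ (fun z => matmul N (matpow N A j) (matpow N A i) x z * A z y)).
    2:{ intros z Hz. rewrite IH; auto. }
    fold (matmul N (matmul N (matpow N A j) (matpow N A i)) A x y).
    rewrite matmul_assoc. auto.
Qed.

Lemma matpow_S_l A k x y : (x < N)%nat -> (y < N)%nat ->
  matpow N A (S k) x y = fsum N (fun z => A x z * matpow N A k z y).
Proof.
  intros Hx Hy. change (S k) with (1 + k)%nat. rewrite matpow_add by auto.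
  unfold matmul. apply fsum_ext. intros z Hz. f_equal. simpl. unfold matmul.
  apply (fsum_matid_l N (fun w => A w z) x Hx).
Qed.

Definition absum (A : nat -> nat -> R) := fsum N (fun x => fsum N (fun y => Rabs (A x y))).

Lemma absum_col A y : (y < N)%nat -> fsum N (fun z => Rabs (A z y)) <= absum A.
Proof.
  intros Hy. unfold absum. apply fsum_le. intros z Hz.
  apply (fsum_term N (fun w => Rabs (A z w)) y Hy). intros; apply Rabs_pos.
Qed.

Lemma absum_entry A x y : (x < N)%nat -> (y < N)%nat -> Rabs (A x y) <= absum A.
Proof.
  intros Hx Hy. eapply Rle_trans; [|apply (absum_col A y Hy)].
  apply (fsum_term N (fun z => Rabs (A z y)) x Hx). intros; apply Rabs_pos.
Qed.

Lemma absum_nonneg A : 0 <= absum A.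
Proof. unfold absum. apply fsum_nonneg. intros. apply fsum_nonneg. intros. apply Rabs_pos. Qed.

Lemma matpow_bound A k : forall x y, (y < N)%nat -> Rabs (matpow N A k x y) <= absum A ^ k.
Proof.
  induction k as [|k IH]; intros x y Hy; simpl.
  - unfold matid. destruct (Nat.eqb x y); rewrite ?Rabs_R1, ?Rabs_R0; lra.
  - unfold matmul. eapply Rle_trans; [apply fsum_abs|].
    apply Rle_trans with (fsum N (fun z => absum A ^ k * Rabs (A z y))).
    + apply fsum_le. intros z Hz. rewrite Rabs_mult. apply Rmult_le_compat_r; [apply Rabs_pos|]. apply IH; auto.
    + rewrite fsum_scal_l. rewrite Rmult_comm. apply Rmult_le_compat_r.
      * apply pow_le, absum_nonneg.
      * apply absum_col; auto.
Qed.

Definition ser (A : nat -> nat -> R) (t : R) x y (k : nat) := t ^ k / INR (fact k) * matpow N A k x y.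

Lemma ser_abs_ex A t x y : (y < N)%nat -> ex_series (fun k => Rabs (ser A t x y k)).
Proof.
  intros Hy. apply (@ex_series_le R_AbsRing R_CompleteNormedModule _ (fun k => (Rabs t * absum A) ^ k / INR (fact k))).
  - intros k. change (norm (Rabs (ser A t x y k))) with (Rabs (Rabs (ser A t x y k))).
    rewrite Rabs_Rabsolu. unfold ser. rewrite Rabs_mult. unfold Rdiv. rewrite Rabs_mult.
    rewrite Rpow_mult_distr. rewrite <- RPow_abs.
    rewrite (Rabs_right (/ INR (fact k))) by (apply Rle_ge; left; apply Rinv_0_lt_compat, INR_fact_lt_0).
    assert (0 <= Rabs t ^ k) by (apply pow_le, Rabs_pos).
    assert (0 < / INR (fact k)) by (apply Rinv_0_lt_compat, INR_fact_lt_0).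
    pose proof (matpow_bound A k x y Hy).
    assert (0 <= Rabs t ^ k * / INR (fact k)) by (apply Rmult_le_pos; lra).
    replace (Rabs t ^ k * absum A ^ k * / INR (fact k)) with (Rabs t ^ k * / INR (fact k) * absum A ^ k) by ring.
    apply Rmult_le_compat_l; auto.
  - exists (exp (Rabs t * absum A)). apply exp_series.
Qed.

Lemma ser_ex A t x y : (y < N)%nat -> ex_series (ser A t x y).
Proof. intros. apply ex_series_Rabs. apply ser_abs_ex; auto. Qed.

Lemma heat_series A t x y : (y < N)%nat -> is_series (ser A t x y) (heat N A t x y).
Proof.
  intros Hy. destruct (ser_ex A t x y Hy) as [l Hl].
  unfold heat. apply is_series_Reals.
  apply (epsilon_spec (inhabits 0) (fun l => Un_cv (fun K => sum_f_R0 (fun k => t ^ k / INR (fact k) * matpow N A k x y) K) l)).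
  exists l. apply is_series_Reals in Hl. apply Hl.
Qed.
End Mat.

Definition Bs (c : R) (k : nat) (b : nat -> R) := sum_f_R0 (fun j => C k j * c ^ (k - j) * b j) k.

Lemma C_n_0 n : C n 0 = 1.
Proof. unfold C. rewrite Nat.sub_0_r. simpl. field. apply INR_fact_neq_0. Qed.

Lemma C_n_n n : C n n = 1.
Proof. unfold C. rewrite Nat.sub_diag. simpl. field. apply INR_fact_neq_0. Qed.

Lemma Bs_S c k b : Bs c (S k) b = Bs c k (fun j => b (S j)) + c * Bs c k b.
Proof.
  unfold Bs. rewrite decomp_sum by lia. simpl pred.
  rewrite C_n_0. rewrite Nat.sub_0_r.
  destruct k as [|k].
  - cbn [sum_f_R0]. replace (C 1 1) with 1 by (symmetry; apply C_n_n). replace (C 0 0) with 1 by (symmetry; apply C_n_0). simpl. ring.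
  - rewrite tech5. rewrite C_n_n, Nat.sub_diag.
    rewrite (tech5 (fun j => C (S k) j * c ^ (S k - j) * b (S j))). rewrite C_n_n, Nat.sub_diag.
    rewrite (decomp_sum (fun j => C (S k) j * c ^ (S k - j) * b j) (S k)) by lia. simpl pred.
    rewrite C_n_0, Nat.sub_0_r.
    rewrite (sum_eq (fun i => C (S (S k)) (S i) * c ^ (S (S k) - S i) * b (S i))
                    (fun i => C (S k) i * c ^ (S k - i) * b (S i) + C (S k) (S i) * c ^ (S k - i) * b (S i))).
    2:{ intros i Hi. rewrite <- pascal by lia. replace (S (S k) - S i)%nat with (S k - i)%nat by lia. ring. }
    rewrite plus_sum.
    rewrite Rmult_plus_distr_l. rewrite scal_sum.
    rewrite (sum_eq (fun i => C (S k) (S i) * c ^ (S k - S i) * b (S i) * c)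
                    (fun i => C (S k) (S i) * c ^ (S k - i) * b (S i))).
    2:{ intros i Hi. replace (S k - i)%nat with (S (S k - S i)) by lia. simpl. ring. }
    simpl. ring.
Qed.

Section Heat.
Variable N : nat.
Variable L : nat -> nat -> R.
Hypothesis HL : is_generator N L.

Lemma heat_rows t x : (x < N)%nat -> fsum N (heat N L t x) = 1.
Proof.
  intros Hx.
  assert (H1 : is_series (fun k => fsum N (fun y => ser N L t x y k)) (fsum N (heat N L t x))).
  { apply fsum_series. intros y Hy. apply heat_series; auto. }
  assert (H2 : is_series (fun k => fsum N (fun y => ser N L t x y k)) 1).
  { apply is_series_Reals. intros e He. exists 0%nat. intros n _.
    replace (sum_f_R0 (fun k => fsum N (fun y => ser N L t x y k)) n) with 1.
    { unfold R_dist. rewrite Rminus_diag, Rabs_R0. auto. }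
    induction n as [|n IH].
    - simpl. unfold ser. simpl.
      rewrite (fsum_ext _ _ (fun y => matid x y * 1)) by (intros; field).
      rewrite (fsum_matid_l N (fun _ => 1) x Hx). auto.
    - simpl. rewrite <- IH. unfold ser.
      rewrite fsum_scal_l. simpl. unfold matmul.
      rewrite fsum_swap.
      rewrite (fsum_ext _ _ (fun z => matpow N L n x z * 0)).
      + rewrite fsum_scal_r. ring.
      + intros z Hz. rewrite fsum_scal_l. f_equal. apply (HL z Hz). }
  apply (is_series_uniq _ _ _ H1 H2).
Qed.

Variable pi : nat -> R.
Hypothesis Hrev : reversible N L pi.

Lemma matpow_rev k : forall x y, (x < N)%nat -> (y < N)%nat ->
  pi x * matpow N L k x y = pi y * matpow N L k y x.
Proof.
  induction k as [|k IH]; intros x y Hx Hy.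
  - simpl. unfold matid. rewrite Nat.eqb_sym. destruct (Nat.eqb y x) eqn:E.
    + apply Nat.eqb_eq in E. subst. auto.
    + ring.
  - rewrite (matpow_S_l N L k y x) by auto. simpl. unfold matmul.
    rewrite <- !fsum_scal_l. apply fsum_ext. intros z Hz.
    replace (pi x * (matpow N L k x z * L z y)) with ((pi x * matpow N L k x z) * L z y) by ring.
    rewrite IH by auto. replace (pi z * matpow N L k z x * L z y) with ((pi z * L z y) * matpow N L k z x) by ring.
    rewrite (Hrev z y) by auto. ring.
Qed.

Lemma heat_rev t x y : (x < N)%nat -> (y < N)%nat -> pi x * heat N L t x y = pi y * heat N L t y x.
Proof.
  intros Hx Hy.
  pose proof (is_series_R_scal (pi x) _ _ (heat_series N L t x y Hy)) as H1.
  pose proof (is_series_R_scal (pi y) _ _ (heat_series N L t y x Hx)) as H2.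
  apply (is_series_uniq (fun k => pi x * ser N L t x y k)); auto.
  apply (is_series_R_ext (fun k => pi y * ser N L t y x k)); auto.
  intros k. unfold ser. replace (pi y * (t ^ k / INR (fact k) * matpow N L k y x)) with (t ^ k / INR (fact k) * (pi y * matpow N L k y x)) by ring. rewrite <- (matpow_rev k x y) by auto. ring.
Qed.

Lemma heat_semigroup s t x y : (x < N)%nat -> (y < N)%nat ->
  heat N L (s + t) x y = fsum N (fun z => heat N L s x z * heat N L t z y).
Proof.
  intros Hx Hy.
  assert (H1 : is_series (fun k => fsum N (fun z => sum_f_R0 (fun j => ser N L s x z j * ser N L t z y (k - j)) k))
                         (fsum N (fun z => heat N L s x z * heat N L t z y))).
  { apply fsum_series. intros z Hz. apply is_series_mult.
    - apply heat_series; auto.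
    - apply heat_series; auto.
    - apply ser_abs_ex; auto.
    - apply ser_abs_ex; auto. }
  apply (is_series_uniq (ser N L (s + t) x y)); [apply heat_series; auto|].
  apply (is_series_R_ext _ _ _ ltac:(intros k; reflexivity)) in H1.
  revert H1. apply is_series_R_ext. intros k.
  rewrite fsum_sum_f.
  rewrite (sum_eq _ (fun j => (s ^ j / INR (fact j) * (t ^ (k - j) / INR (fact (k - j)))) * matpow N L k x y)).
  2:{ intros j Hj. unfold ser.
      rewrite (fsum_ext _ _ (fun z => (s ^ j / INR (fact j) * (t ^ (k - j) / INR (fact (k - j)))) *
                                       (matpow N L j x z * matpow N L (k - j) z y))) by (intros; ring).
      rewrite fsum_scal_l. f_equal.
      replace (matpow N L k x y) with (matpow N L (j + (k - j)) x y) by (f_equal; lia).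
      rewrite matpow_add by auto. unfold matmul. auto. }
  rewrite <- (scal_sum (fun j => s ^ j / INR (fact j) * (t ^ (k - j) / INR (fact (k - j)))) k (matpow N L k x y)).
  assert (Hb : sum_f_R0 (fun j => s ^ j / INR (fact j) * (t ^ (k - j) / INR (fact (k - j)))) k
               = (s + t) ^ k / INR (fact k)).
  { rewrite binomial.
    transitivity (/ INR (fact k) * sum_f_R0 (fun i => C k i * s ^ i * t ^ (k - i)) k); [|unfold Rdiv; ring].
    rewrite scal_sum.
    apply sum_eq. intros j Hj. unfold C.
    field. split; [apply INR_fact_neq_0|]. split; apply INR_fact_neq_0. }
  rewrite Hb. unfold ser. ring.
Qed.

Definition cshift := absum N L.
Definition Lc x y := L x y + cshift * matid x y.

Lemma Lc_nonneg x y : (x < N)%nat -> (y < N)%nat -> 0 <= Lc x y.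
Proof.
  intros Hx Hy. unfold Lc, matid. destruct (Nat.eqb x y) eqn:E.
  - apply Nat.eqb_eq in E. subst. pose proof (absum_entry N L y y Hy Hy).
    unfold cshift. unfold Rabs in H. destruct (Rcase_abs (L y y)); lra.
  - apply Nat.eqb_neq in E. destruct (HL x Hx) as [H _]. specialize (H y Hy E). lra.
Qed.

Lemma Lcpow_nonneg k : forall x y, (x < N)%nat -> (y < N)%nat -> 0 <= matpow N Lc k x y.
Proof.
  induction k as [|k IH]; intros x y Hx Hy; simpl.
  - unfold matid. destruct (Nat.eqb x y); lra.
  - unfold matmul. apply fsum_nonneg. intros z Hz. apply Rmult_le_pos; [apply IH|apply Lc_nonneg]; auto.
Qed.

Lemma Lcpow_expand k : forall x y, (x < N)%nat -> (y < N)%nat ->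
  matpow N Lc k x y = Bs cshift k (fun j => matpow N L j x y).
Proof.
  induction k as [|k IH]; intros x y Hx Hy.
  - unfold Bs. simpl. rewrite C_n_0. ring.
  - rewrite Bs_S. simpl matpow at 1. unfold matmul at 1. unfold Lc at 2.
    rewrite (fsum_ext _ _ (fun z => matpow N Lc k x z * L z y + cshift * (matpow N Lc k x z * matid z y))) by (intros; ring).
    rewrite fsum_plus, fsum_scal_l. rewrite (fsum_matid_r N (matpow N Lc k x) y Hy).
    rewrite IH by auto. f_equal.
    rewrite (fsum_ext _ _ (fun z => Bs cshift k (fun j => matpow N L j x z) * L z y)) by (intros; rewrite IH; auto).
    unfold Bs. rewrite (fsum_ext _ _ (fun z => sum_f_R0 (fun j => C k j * cshift ^ (k - j) * (matpow N L j x z * L z y)) k)).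
    2:{ intros z Hz. rewrite Rmult_comm, scal_sum. apply sum_eq. intros; ring. }
    rewrite fsum_sum_f. apply sum_eq. intros j Hj. rewrite fsum_scal_l. simpl. unfold matmul. auto.
Qed.

Lemma cshift_nonneg : 0 <= cshift.
Proof. apply absum_nonneg. Qed.

Lemma heat_nonneg t x y : 0 <= t -> (x < N)%nat -> (y < N)%nat -> 0 <= heat N L t x y.
Proof.
  intros Ht Hx Hy.
  set (b := fun i => (cshift * t) ^ i / INR (fact i)).
  assert (Hb0 : forall i, 0 <= b i).
  { intros i. unfold b. apply Rmult_le_pos; [apply pow_le; pose proof cshift_nonneg; nra|].
    left. apply Rinv_0_lt_compat, INR_fact_lt_0. }
  assert (Hbs : is_series b (exp (cshift * t))) by apply exp_series.
  assert (Hbabs : ex_series (fun i => Rabs (b i))).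
  { exists (exp (cshift * t)). apply (is_series_R_ext b); auto. intros i. rewrite Rabs_right; auto. apply Rle_ge; auto. }
  pose proof (is_series_mult _ _ _ _ (heat_series N L t x y Hy) Hbs (ser_abs_ex N L t x y Hy) Hbabs) as HM.
  assert (Hpos : 0 <= heat N L t x y * exp (cshift * t)).
  { apply (is_series_nonneg _ _ HM). intros k.
    rewrite (sum_eq _ (fun j => (C k j * cshift ^ (k - j) * matpow N L j x y) * (t ^ k / INR (fact k)))).
    - rewrite <- scal_sum. fold (Bs cshift k (fun j => matpow N L j x y)).
      rewrite <- Lcpow_expand by auto. rewrite Rmult_comm. apply Rmult_le_pos.
      + apply Lcpow_nonneg; auto.
      + apply Rmult_le_pos; [apply pow_le; auto|]. left. apply Rinv_0_lt_compat, INR_fact_lt_0.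
    - intros j Hj. unfold ser, b, C.
      replace (t ^ k) with (t ^ j * t ^ (k - j)) by (rewrite <- pow_add; f_equal; lia).
      rewrite Rpow_mult_distr.
      field. split; [apply INR_fact_neq_0|]. split; apply INR_fact_neq_0. }
  pose proof (exp_pos (cshift * t)).
  apply (Rmult_le_reg_r (exp (cshift * t))); auto. lra.
Qed.
End Heat.

Lemma cont_step N L pi mu t0 h :
  is_generator N L -> irreducible N L -> stationary_generator N L pi -> reversible N L pi ->
  0 < h ->
  d2_cont N L pi mu (t0 + h) <= d2_cont N L pi mu t0 /\
  d2_cont N L pi mu (t0 + h) ^ 2 <= d2_cont N L pi mu t0 * d2_cont N L pi mu (t0 + 2 * h).
Proof.
  intros HL Hirr [Hprob _] Hrev Hh.
  pose proof (pi_pos N L pi Hirr Hrev Hprob) as Hpi.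
  set (P := heat N L h).
  assert (HP0 : forall x y, (x < N)%nat -> (y < N)%nat -> 0 <= P x y).
  { intros x y Hx Hy. apply heat_nonneg; auto; lra. }
  assert (HP1 : forall x, (x < N)%nat -> fsum N (P x) = 1) by (intros; apply heat_rows; auto).
  assert (HPr : forall x y, (x < N)%nat -> (y < N)%nat -> pi x * P x y = pi y * P y x)
    by (intros; apply heat_rev; auto).
  set (nu := fun m => vecmat N mu (heat N L (t0 + INR m * h))).
  assert (Hnu : forall m y, (y < N)%nat -> nu (S m) y = vecmat N (nu m) P y).
  { intros m y Hy. unfold nu, vecmat, P.
    rewrite (fsum_ext _ _ (fun x => fsum N (fun z => mu x * heat N L (t0 + INR m * h) x z * heat N L h z y))).
    - rewrite fsum_swap. apply fsum_ext. intros z Hz. rewrite <- fsum_scal_r. auto.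
    - intros x Hx. replace (t0 + INR (S m) * h) with ((t0 + INR m * h) + h) by (rewrite S_INR; ring).
      rewrite heat_semigroup by auto. rewrite <- fsum_scal_l. apply fsum_ext. intros; ring. }
  pose proof (DD_mon N P pi Hpi HP0 HP1 HPr nu Hnu 0) as H1.
  pose proof (DD_cvx N P pi Hpi HP1 HPr nu Hnu 0) as H2.
  unfold DD, nu in H1, H2. simpl INR in H1, H2.
  replace (t0 + 0 * h) with t0 in H1, H2 by ring.
  replace (t0 + 1 * h) with (t0 + h) in H1, H2 by ring.
  replace (t0 + (1 + 1) * h) with (t0 + 2 * h) in H2 by ring.
  unfold d2_cont. auto.
Qed.

Lemma cont_props N L pi mu :
  is_generator N L -> irreducible N L -> stationary_generator N L pi -> reversible N L pi ->
  (forall t, 0 <= d2_cont N L pi mu t) /\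
  (forall s t, 0 <= s <= t -> d2_cont N L pi mu t <= d2_cont N L pi mu s) /\
  (forall t h, 0 <= t -> 0 < h -> d2_cont N L pi mu (t + h) ^ 2 <= d2_cont N L pi mu t * d2_cont N L pi mu (t + 2 * h)).
Proof.
  intros HL Hirr Hst Hrev. split; [|split].
  - intros t. unfold d2_cont, l2dist. apply sqrt_pos.
  - intros s t Hst'. destruct (Req_dec s t) as [->|Hne]; [lra|].
    replace t with (s + (t - s)) by ring.
    apply (cont_step N L pi mu s (t - s)); auto. lra.
  - intros t h Ht Hh. apply (cont_step N L pi mu t h); auto.
Qed.

Theorem theorem3p1 :
  (* (1) continuous time *)
  (forall (N : nat -> nat) (L : nat -> nat -> nat -> R) (pi mu : nat -> nat -> R),
     (forall n, is_generator (N n) (L n)) ->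
     (forall n, irreducible (N n) (L n)) ->
     (forall n, stationary_generator (N n) (L n) (pi n)) ->
     (forall n, reversible (N n) (L n) (pi n)) ->
     (forall n, is_prob (N n) (mu n)) ->
     liminf_gt (fun n => l2norm2 (N n) (mu n) (pi n)) 1 ->
     (cutoff_cont (fun n => d2_cont (N n) (L n) (pi n) (mu n)) <->
      precutoff_cont (fun n => d2_cont (N n) (L n) (pi n) (mu n))))
  /\
  (* (2) discrete time *)
  (forall (N : nat -> nat) (K : nat -> nat -> nat -> R) (pi mu : nat -> nat -> R),
     (forall n, is_kernel (N n) (K n)) ->
     (forall n, irreducible (N n) (K n)) ->
     (forall n, stationary_kernel (N n) (K n) (pi n)) ->
     (forall n, reversible (N n) (K n) (pi n)) ->
     (forall n, is_prob (N n) (mu n)) ->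
     liminf_gt (fun n => l2norm2 (N n) (vecmat (N n) (mu n) (K n)) (pi n)) 1 ->
     (exists eps0, 0 < eps0 /\
        T2_disc_to_infty (fun n => d2_disc (N n) (K n) (pi n) (mu n)) eps0) ->
     (cutoff_disc (fun n => d2_disc (N n) (K n) (pi n) (mu n)) <->
      precutoff_disc (fun n => d2_disc (N n) (K n) (pi n) (mu n)))).
Proof.
  split.
  - intros N L pi mu HL Hirr Hst Hrev _ _.
    apply cont_abstract.
    + intros n t. apply (cont_props (N n) (L n) (pi n) (mu n)); auto.
    + intros n s t Hs. apply (cont_props (N n) (L n) (pi n) (mu n)); auto.
    + intros n t h Ht Hh. apply (cont_props (N n) (L n) (pi n) (mu n)); auto.
  - intros N K pi mu Hk Hirr Hst Hrev _ _ [eps0 [He0 HT2]].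
    apply (disc_abstract _ eps0); auto.
    + intros n m. apply (disc_props (N n) (K n) (pi n) (mu n)); auto.
    + intros n m. apply (disc_props (N n) (K n) (pi n) (mu n)); auto.
    + intros n m. apply (disc_props (N n) (K n) (pi n) (mu n)); auto.
Qed.
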